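(* Fix $j\in\mathbb{Z}$ and let $k_n=\lfloor\log_2 n+\log_2\log_2 n\rfloor+j$. Then, under the conditional distribution given $X_n^*=2^{k_n}$, \[ \frac{S_n}{X_n^*}-2^{-j}\,2^{\{\log_2 n+\log_2\log_2 n\}}\xrightarrow{\ \mathbb{P}\ }1 . \]
   Context: $X_1,X_2,\ldots$ are iid with $\mathbb{P}\{X_i=2^k\}=2^{-k}$, $k\in\{1,2,\ldots\}$; $S_n=\sum_{i\le n}X_i$, $X_n^*=\max_{i\le n}X_i$; $\{y\}$ denotes the fractional part of $y$. Convergence in conditional probability means that for every $\varepsilon>0$ the conditional probability (given $X_n^*=2^{k_n}$) that the left side differs from $1$ by more than $\varepsilon$ tends to $0$. *)

(* Defs.v *)
From Stdlib Require Export Reals List.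
Import ListNotations.
Open Scope R_scope.

(* A sample point (X_1,...,X_n) is encoded by its list of exponents
   [e_1; ...; e_n], with X_i = 2^(e_i), e_i >= 1. *)

Fixpoint exp_tuples (n k : nat) : list (list nat) :=
  match n with
  | O => [[]]
  | S m => flat_map (fun e => map (cons e) (exp_tuples m k)) (seq 1 k)
  end.

(* P{X_1 = 2^(e_1), ..., X_n = 2^(e_n)} = prod_i 2^(-e_i). *)
Definition weight (e : list nat) : R :=
  fold_right (fun a r => (/ 2) ^ a * r) 1 e.

Definition max_exp (e : list nat) : nat := fold_right Nat.max 0%nat e.

Definition S_of (e : list nat) : R := fold_right (fun a r => 2 ^ a + r) 0 e.

Definition mass (n k : nat) (A : list nat -> bool) : R :=
  fold_right Rplus 0
    (map weight
       (filter (fun e => andb (Nat.eqb (max_exp e) k) (A e)) (exp_tuples n k))).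

(* P( A | X_n^* = 2^k ) for k >= 1.  On {X_n^* = 2^k} every X_i <= 2^k,
   so the conditioning event is exactly the finite set enumerated above. *)
Definition cond_prob (n k : nat) (A : list nat -> bool) : R :=
  mass n k A / mass n k (fun _ => true).

Definition log2 (x : R) : R := ln x / ln 2.

Definition k_seq (j : Z) (n : nat) : Z :=
  (Int_part (log2 (INR n) + log2 (log2 (INR n))) + j)%Z.

(* Main.v *)
Require Import Defs.
From Stdlib Require Import Reals List Lra Lia ZArith.
Import ListNotations.
Open Scope R_scope.

Definition sumf {A} (f : A -> R) (l : list A) : R := fold_right (fun x r => f x + r) 0 l.

Lemma sumf_app {A} (f : A -> R) l1 l2 : sumf f (l1 ++ l2) = sumf f l1 + sumf f l2.
Proof. induction l1; simpl; [ring| rewrite IHl1; ring]. Qed.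

Lemma sumf_map {A B} (f : B -> R) (g : A -> B) l : sumf f (map g l) = sumf (fun x => f (g x)) l.
Proof. induction l; simpl; [ring| rewrite IHl; ring]. Qed.

Lemma sumf_flat_map {A B} (f : B -> R) (g : A -> list B) l :
  sumf f (flat_map g l) = sumf (fun x => sumf f (g x)) l.
Proof. induction l; simpl; [ring| rewrite sumf_app, IHl; ring]. Qed.

Lemma sumf_ext {A} (f g : A -> R) l : (forall x, In x l -> f x = g x) -> sumf f l = sumf g l.
Proof. induction l; simpl; intros H; [ring|]. rewrite H, IHl; auto. Qed.

Lemma sumf_le {A} (f g : A -> R) l : (forall x, In x l -> f x <= g x) -> sumf f l <= sumf g l.
Proof. induction l; simpl; intros H; [lra|]. specialize (IHl (fun x h => H x (or_intror h))).
  specialize (H a (or_introl eq_refl)). lra. Qed.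

Lemma sumf_lin {A} (f g : A -> R) p q l :
  sumf (fun x => p * f x + q * g x) l = p * sumf f l + q * sumf g l.
Proof. induction l; simpl; [ring| rewrite IHl; ring]. Qed.

Lemma sumf_scal {A} (f : A -> R) p l : sumf (fun x => p * f x) l = p * sumf f l.
Proof. induction l; simpl; [ring| rewrite IHl; ring]. Qed.

Lemma sumf_nonneg {A} (f : A -> R) l : (forall x, In x l -> 0 <= f x) -> 0 <= sumf f l.
Proof. intros H. replace 0 with (sumf (fun _ => 0) l).
  apply sumf_le; auto. induction l; simpl; auto. rewrite IHl; auto with real. intros; apply H; simpl; auto. Qed.

Lemma sum_map_Rplus {A} (g : A -> R) l : fold_right Rplus 0 (map g l) = sumf g l.
Proof. induction l; simpl; auto. rewrite IHl; auto. Qed.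

Lemma sum_filter {A} (g : A -> R) (p : A -> bool) l :
  sumf g (filter p l) = sumf (fun x => g x * (if p x then 1 else 0)) l.
Proof. induction l; simpl; auto. destruct (p a); simpl; rewrite IHl; ring. Qed.

Section K.
Variable k : nat.

Definition E (m : nat) (f : list nat -> R) : R := sumf (fun e => weight e * f e) (exp_tuples m k).

Lemma E_0 f : E 0 f = f [].
Proof. unfold E; simpl. ring. Qed.

Lemma E_S m f : E (S m) f = sumf (fun a => (/2)^a * E m (fun t => f (a :: t))) (seq 1 k).
Proof. unfold E; simpl exp_tuples. rewrite sumf_flat_map. apply sumf_ext; intros a _.
  rewrite sumf_map, <- sumf_scal. apply sumf_ext; intros; simpl; ring. Qed.

Lemma weight_nonneg e : 0 <= weight e.
Proof. induction e; simpl; [lra|]. apply Rmult_le_pos; auto. apply pow_le; lra. Qed.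

Lemma E_ext m f g : (forall t, In t (exp_tuples m k) -> f t = g t) -> E m f = E m g.
Proof. intros H; unfold E; apply sumf_ext; intros; rewrite H; auto. Qed.

Lemma E_le m f g : (forall t, In t (exp_tuples m k) -> f t <= g t) -> E m f <= E m g.
Proof. intros H; unfold E; apply sumf_le; intros. apply Rmult_le_compat_l; auto using weight_nonneg. Qed.

Lemma E_nonneg m f : (forall t, In t (exp_tuples m k) -> 0 <= f t) -> 0 <= E m f.
Proof. intros H; unfold E; apply sumf_nonneg; intros. apply Rmult_le_pos; auto using weight_nonneg. Qed.

Lemma E_lin m f g p q : E m (fun t => p * f t + q * g t) = p * E m f + q * E m g.
Proof. unfold E. rewrite <- sumf_lin. apply sumf_ext; intros; ring. Qed.

Lemma in_tuples m t : In t (exp_tuples m k) -> (max_exp t <= k)%nat.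
Proof. revert t; induction m; simpl; intros t H.
  - destruct H as [<-|[]]; simpl; lia.
  - apply in_flat_map in H as [a [Ha Ht]]. apply in_map_iff in Ht as [t' [<- Ht']].
    apply in_seq in Ha. simpl. specialize (IHm _ Ht'). lia. Qed.

End K.

Lemma max_exp_cons a t : max_exp (a :: t) = Nat.max a (max_exp t).
Proof. reflexivity. Qed.

Lemma sumf_single {A} (f : A -> R) x : sumf f [x] = f x.
Proof. unfold sumf; simpl; ring. Qed.

Lemma E_split k' m g :
 E (S k') (S m) (fun t => if Nat.eqb (max_exp t) (S k') then g t else 0) =
 sumf (fun a => (/2)^a * E (S k') m (fun t => if Nat.eqb (max_exp t) (S k') then g (a::t) else 0)) (seq 1 k')
 + (/2)^(S k') * E (S k') m (fun t => g (S k' :: t)).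
Proof.
  rewrite E_S, seq_S, sumf_app. simpl (sumf _ [_]). rewrite Rplus_0_r. f_equal.
  - apply sumf_ext; intros a Ha. apply in_seq in Ha. f_equal. apply E_ext; intros t Ht.
    apply in_tuples in Ht. rewrite max_exp_cons.
    destruct (Nat.eqb_spec (Nat.max a (max_exp t)) (S k')); destruct (Nat.eqb_spec (max_exp t) (S k')); auto; lia.
  - f_equal. apply E_ext; intros t Ht. apply in_tuples in Ht.
    destruct (max_exp t) eqn:Hm; simpl; [rewrite Nat.eqb_refl; auto|].
    rewrite Nat.max_l by lia. rewrite Nat.eqb_refl; auto.
Qed.

Section F.
Variable k' : nat.
Variable phi : R -> R.
Hypothesis phi_nn : forall y, 0 <= phi y.
Let k := S k'.

Definition F m x := E k m (fun t => if Nat.eqb (max_exp t) k then phi (x + S_of t) else 0).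
Definition G m x := E k m (fun t => phi (x + S_of t)).

Lemma G_nonneg m x : 0 <= G m x.
Proof. apply E_nonneg; auto. Qed.

Lemma G_S m x : G (S m) x = sumf (fun a => (/2)^a * G m (x + 2^a)) (seq 1 k).
Proof. unfold G. rewrite E_S. apply sumf_ext; intros a _. f_equal. apply E_ext; intros t _.
  simpl S_of. now rewrite Rplus_assoc. Qed.

Lemma F_S m x : F (S m) x = sumf (fun a => (/2)^a * F m (x + 2^a)) (seq 1 k') + (/2)^k * G m (x + 2^k).
Proof. unfold F, G, k. rewrite E_split. f_equal.
  - apply sumf_ext; intros a _. f_equal. apply E_ext; intros t _. simpl S_of.
    destruct (max_exp t =? S k')%nat; auto. now rewrite Rplus_assoc.
  - f_equal. apply E_ext; intros t _. simpl S_of. now rewrite Rplus_assoc. Qed.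

Lemma F_bound m : forall x, F (S m) x <= INR (S m) * (/2)^k * G m (x + 2^k).
Proof.
  induction m; intros x.
  - rewrite F_S. replace (sumf _ _) with 0.
    + simpl INR. lra.
    + symmetry. transitivity (sumf (fun _:nat => 0) (seq 1 k')).
      * apply sumf_ext; intros a _. unfold F. rewrite E_0. unfold k. simpl. ring.
      * induction (seq 1 k'); simpl; auto; lra.
  - rewrite F_S.
    apply Rle_trans with (INR (S m) * (/2)^k * sumf (fun a => (/2)^a * G m (x + 2^k + 2^a)) (seq 1 k')
        + (/2)^k * G (S m) (x + 2^k)).
    + apply Rplus_le_compat_r. rewrite <- sumf_scal. apply sumf_le; intros a _.
      eapply Rle_trans. apply Rmult_le_compat_l. apply pow_le; lra. apply IHm.
      replace (x + 2^a + 2^k) with (x + 2^k + 2^a) by ring. right; ring.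
    + rewrite (G_S m (x + 2^k)).
      replace (seq 1 k) with (seq 1 k' ++ [k]) by (unfold k; rewrite seq_S; reflexivity).
      rewrite sumf_app, sumf_single.
      assert (0 <= (/2)^k * G m (x + 2^k + 2^k)).
      { apply Rmult_le_pos; [apply pow_le; lra| apply G_nonneg]. }
      assert (0 <= INR (S m) * (/2)^k) by (apply Rmult_le_pos; [apply pos_INR| apply pow_le; lra]).
      rewrite (S_INR (S m)). nra.
Qed.

End F.

Lemma sumf_lin3 {A} (f g h : A -> R) p q r l :
  sumf (fun x => p * f x + q * g x + r * h x) l = p * sumf f l + q * sumf g l + r * sumf h l.
Proof. induction l; simpl; [ring| rewrite IHl; ring]. Qed.

Lemma E_lin3 k m f g h p q r : E k m (fun t => p * f t + q * g t + r * h t) = p * E k m f + q * E k m g + r * E k m h.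
Proof. unfold E. rewrite <- sumf_lin3. apply sumf_ext; intros; ring. Qed.

Section Mom.
Variable k : nat.
Definition zz := sumf (fun a => (/2)^a) (seq 1 k).
Definition mu1 := sumf (fun a => (/2)^a * 2^a) (seq 1 k).
Definition mu2 := sumf (fun a => (/2)^a * (2^a)^2) (seq 1 k).
Definition Am m := E k m (fun _ => 1).
Definition Bm m := E k m S_of.
Definition Cm m := E k m (fun t => S_of t ^ 2).

Lemma Am_val m : Am m = zz ^ m.
Proof. induction m; unfold Am in *. rewrite E_0; simpl; auto.
  rewrite E_S. simpl pow. rewrite <- IHm. unfold zz.
  rewrite Rmult_comm, <- sumf_scal.
  apply sumf_ext; intros. ring. Qed.

Lemma Bm_S m : Bm (S m) = mu1 * Am m + zz * Bm m.
Proof. unfold Bm, Am. rewrite E_S.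
  transitivity (sumf (fun a => (/2)^a * (2^a * E k m (fun _ => 1) + 1 * E k m S_of)) (seq 1 k)).
  - apply sumf_ext; intros a _. f_equal. rewrite <- E_lin. apply E_ext; intros; simpl; ring.
  - transitivity (sumf (fun a => E k m (fun _ => 1) * ((/2)^a * 2^a) + E k m S_of * (/2)^a) (seq 1 k)).
    + apply sumf_ext; intros; ring.
    + rewrite (sumf_lin (fun a => (/2)^a * 2^a) (fun a => (/2)^a)). unfold mu1, zz. ring. Qed.

Lemma Cm_S m : Cm (S m) = mu2 * Am m + 2 * mu1 * Bm m + zz * Cm m.
Proof. unfold Cm, Bm, Am. rewrite E_S.
  transitivity (sumf (fun a => (/2)^a * ((2^a)^2 * E k m (fun _ => 1) + (2 * 2^a) * E k m S_of + 1 * E k m (fun t => S_of t ^ 2))) (seq 1 k)).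
  - apply sumf_ext; intros a _. f_equal. rewrite <- E_lin3. apply E_ext; intros; simpl; ring.
  - transitivity (sumf (fun a => E k m (fun _ => 1) * ((/2)^a * (2^a)^2) + (2 * E k m S_of) * ((/2)^a * 2^a) + E k m (fun t => S_of t ^ 2) * (/2)^a) (seq 1 k)).
    + apply sumf_ext; intros; ring.
    + rewrite (sumf_lin3 (fun a => (/2)^a * (2^a)^2) (fun a => (/2)^a * 2^a) (fun a => (/2)^a)). unfold mu1, mu2, zz. ring. Qed.

Lemma Bm_val m : zz * Bm m = INR m * mu1 * zz ^ m.
Proof. induction m.
  - unfold Bm. rewrite E_0. simpl. ring.
  - rewrite Bm_S, Am_val. replace (zz * (mu1 * zz ^ m + zz * Bm m)) with (mu1 * zz^(S m) + zz * (zz * Bm m)) by (simpl; ring).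
    rewrite IHm, S_INR. simpl; ring. Qed.

Lemma Cm_val m : zz^2 * Cm m = INR m * mu2 * zz ^ (S m) + INR m * (INR m - 1) * mu1^2 * zz^m.
Proof. induction m.
  - unfold Cm. rewrite E_0. simpl. ring.
  - rewrite Cm_S, Am_val.
    replace (zz^2 * (mu2 * zz ^ m + 2 * mu1 * Bm m + zz * Cm m)) with
       (mu2 * zz^(S (S m)) + 2 * mu1 * zz * (zz * Bm m) + zz * (zz^2 * Cm m)) by (simpl; ring).
    rewrite IHm, Bm_val, S_INR. simpl; ring. Qed.

End Mom.

Lemma zz_val k : zz k = 1 - (/2)^k.
Proof. unfold zz. induction k. simpl. unfold sumf; simpl; ring.
  rewrite seq_S, sumf_app, IHk. unfold sumf at 1; simpl. field. Qed.

Lemma mu1_val k : mu1 k = INR k.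
Proof. unfold mu1. induction k. unfold sumf; simpl; ring.
  rewrite seq_S, sumf_app, IHk, S_INR. unfold sumf at 1; simpl.
  rewrite pow_inv. field. apply pow_nonzero; lra. Qed.

Lemma mu2_val k : mu2 k = 2 ^ (S k) - 2.
Proof. unfold mu2. induction k. unfold sumf; simpl; ring.
  rewrite seq_S, sumf_app, IHk. unfold sumf at 1. simpl fold_right.
  simpl. rewrite pow_inv. field. apply pow_nonzero; lra. Qed.

Lemma pow_le1 x m : 0 <= x <= 1 -> 0 <= x ^ m <= 1.
Proof. intros H; induction m; simpl; [lra|]. split; [apply Rmult_le_pos; lra| nra]. Qed.

Lemma Phi_bound k m D c : 0 < D -> 0 < zz k <= 1 -> 0 <= mu2 k ->
  E k m (fun t => (S_of t / D - c)^2) <= (INR m * mu2 k / D^2 + (INR m * mu1 k / D - c * zz k)^2) / zz k ^ 2.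
Proof. intros HD Hz Hm2.
  assert (HX : E k m (fun t => (S_of t / D - c)^2) = (/D^2) * Cm k m + (-2*c/D) * Bm k m + c^2 * Am k m).
  { unfold Cm, Bm, Am. rewrite <- E_lin3. apply E_ext; intros. field. lra. }
  rewrite HX. apply Rmult_le_reg_l with (zz k ^ 2). apply pow_lt; lra.
  replace (zz k ^ 2 * (/ D ^ 2 * Cm k m + -2 * c / D * Bm k m + c ^ 2 * Am k m)) with
     ((zz k ^2 * Cm k m) / D^2 - 2*c/D * zz k * (zz k * Bm k m) + c^2 * zz k^2 * Am k m) by (field; lra).
  rewrite Cm_val, Bm_val, Am_val.
  replace (zz k ^ 2 * ((INR m * mu2 k / D ^ 2 + (INR m * mu1 k / D - c * zz k) ^ 2) / zz k ^ 2))
    with (INR m * mu2 k / D ^ 2 + (INR m * mu1 k / D - c * zz k) ^ 2) by (field; lra).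
  pose proof (pow_le1 (zz k) m ltac:(lra)) as [Hp0 Hp1].
  set (p := zz k ^ m) in *. set (z := zz k) in *.
  assert (E1 : z ^ S m = z * p) by reflexivity. rewrite E1.
  assert (HA : 0 <= INR m * mu2 k / D^2).
  { apply Rmult_le_pos; [apply Rmult_le_pos; auto; apply pos_INR| apply Rlt_le, Rinv_0_lt_compat, pow_lt; lra]. }
  assert (HY : 0 <= INR m * mu1 k ^ 2 / D^2).
  { apply Rmult_le_pos; [apply Rmult_le_pos; [apply pos_INR| apply pow2_ge_0]| apply Rlt_le, Rinv_0_lt_compat, pow_lt; lra]. }
  replace ((INR m * mu2 k * (z * p) + INR m * (INR m - 1) * mu1 k ^ 2 * p) / D ^ 2 -
     2 * c / D * z * (INR m * mu1 k * p) + c ^ 2 * z ^ 2 * p)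
   with (INR m * mu2 k / D^2 * (z * p) + p * ((INR m * mu1 k / D - c * z) ^ 2 - INR m * mu1 k ^ 2 / D^2)) by (field; lra).
  set (a := INR m * mu2 k / D^2) in *. set (Y := INR m * mu1 k ^ 2 / D^2) in *.
  set (X := (INR m * mu1 k / D - c * z) ^ 2).
  assert (0 <= X) by apply pow2_ge_0.
  assert (z * p <= 1) by nra.
  assert (a * (z*p) <= a) by nra. assert (p * X <= X) by nra. assert (0 <= p * Y) by nra.
  nra.
Qed.

Definition Hm k m := E k m (fun t => if Nat.eqb (max_exp t) k then 1 else 0).

Lemma Hm_S k' m : Hm (S k') (S m) = zz k' * Hm (S k') m + (/2)^(S k') * zz (S k') ^ m.
Proof. unfold Hm. rewrite (E_split k' m (fun _ => 1)). rewrite <- (Am_val (S k')). unfold Am.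
  f_equal. unfold zz. rewrite Rmult_comm, <- sumf_scal. apply sumf_ext; intros; ring. Qed.

Lemma zz_bounds k : 0 <= zz k <= 1.
Proof. rewrite zz_val. pose proof (pow_le1 (/2) k ltac:(lra)). lra. Qed.

Lemma zz_mono k : zz k <= zz (S k).
Proof. rewrite !zz_val. simpl. pose proof (pow_le1 (/2) k ltac:(lra)). lra. Qed.

Lemma Hm_lower k' m : INR (S m) * (/2)^(S k') * zz k' ^ m <= Hm (S k') (S m).
Proof. induction m.
  - rewrite Hm_S. unfold Hm. rewrite E_0. simpl. lra.
  - rewrite Hm_S. pose proof (zz_bounds k'). pose proof (zz_mono k').
    assert (zz k' ^ S m <= zz (S k') ^ S m) by (apply pow_incr; lra).
    assert (0 <= (/2)^(S k')) by (apply pow_le; lra).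
    rewrite S_INR. simpl pow in *. nra. Qed.

Lemma mass_E n k A : mass n k A = E k n (fun e => if andb (Nat.eqb (max_exp e) k) (A e) then 1 else 0).
Proof. unfold mass, E. rewrite sum_map_Rplus, sum_filter. reflexivity. Qed.

Lemma sq_gt eps v : 0 < eps -> eps < Rabs v -> 1 < v^2 / eps^2.
Proof. intros H1 H2. rewrite <- pow2_abs. apply Rmult_lt_reg_r with (eps^2). nra.
  field_simplify; nra. Qed.

Lemma key m k' c eps : (1 <= k')%nat -> 0 < eps ->
  let k := S k' in let D := 2 ^ k in
  0 <= cond_prob (S m) k (fun e => if Rlt_dec eps (Rabs (S_of e / 2 ^ k - c - 1)) then true else false)
  <= (2 * (INR m / D) + (INR m * INR k / D - c * (1 - / D))^2) / ((1 - / D)^2 * eps^2 * (1 - 2 / D)^m).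
Proof.
  intros Hk Heps k D.
  set (Bad := fun e => if Rlt_dec eps (Rabs (S_of e / 2 ^ k - c - 1)) then true else false).
  assert (HD : 4 <= D).
  { unfold D, k. replace 4 with (2^2) by (simpl; ring). apply Rle_pow; [lra| lia]. }
  assert (HDk : (/2)^k = /D) by (unfold D; apply pow_inv).
  assert (Hzz : zz k = 1 - /D) by (rewrite zz_val, HDk; reflexivity).
  assert (Hzz' : zz k' = 1 - 2/D).
  { rewrite zz_val. unfold D, k. simpl. rewrite pow_inv. field. apply pow_nonzero; lra. }
  assert (Hm1 : mu1 k = INR k) by apply mu1_val.
  assert (Hm2 : mu2 k <= 2 * D) by (rewrite mu2_val; unfold D; simpl; lra).
  assert (Hm20 : 0 <= mu2 k) by (rewrite mu2_val; unfold D, k in *; simpl in *; lra).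
  assert (Htot : mass (S m) k (fun _ => true) = Hm k (S m)).
  { rewrite mass_E. unfold Hm. apply E_ext; intros. rewrite Bool.andb_true_r. auto. }
  assert (HH := Hm_lower k' m). fold k in HH. rewrite <- Htot, HDk, Hzz' in HH.
  assert (Hw : 0 < 1 - 2/D).
  { apply Rlt_Rminus. apply Rmult_lt_reg_r with D; [lra|]. field_simplify; lra. }
  assert (Hwm : 0 < (1 - 2/D)^m) by (apply pow_lt; auto).
  assert (HSm : 0 < INR (S m)) by (apply lt_0_INR; lia).
  assert (HiD : 0 < /D) by (apply Rinv_0_lt_compat; lra).
  assert (Hpos : 0 < mass (S m) k (fun _ => true)).
  { eapply Rlt_le_trans; [|apply HH]. apply Rmult_lt_0_compat; auto. apply Rmult_lt_0_compat; auto. }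
  set (phi := fun y => (y / D - c - 1)^2 / eps^2).
  assert (phi_nn : forall y, 0 <= phi y).
  { intros y; unfold phi. apply Rmult_le_pos; [apply pow2_ge_0| apply Rlt_le, Rinv_0_lt_compat, pow_lt; lra]. }
  assert (Hb1 : mass (S m) k Bad <= F k' phi (S m) 0).
  { rewrite mass_E. unfold F. apply E_le; intros t _. fold k.
    destruct (Nat.eqb (max_exp t) k); simpl; [|lra].
    unfold Bad. destruct (Rlt_dec eps _) as [Hl|Hl]; [|apply phi_nn].
    unfold phi. rewrite Rplus_0_l. apply Rlt_le. apply sq_gt; auto. }
  assert (Hb2 := F_bound k' phi phi_nn m 0). fold k in Hb2.
  assert (HG : G k' phi m (0 + 2^k) = / eps^2 * E k m (fun t => (S_of t / D - c)^2)).
  { unfold G. fold k.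
    replace (/ eps^2 * E k m (fun t => (S_of t / D - c)^2)) with
      (/ eps^2 * E k m (fun t => (S_of t / D - c)^2) + 0 * E k m (fun _ => 0)) by ring.
    rewrite <- E_lin. apply E_ext; intros. unfold phi, D. field. split; [apply pow_nonzero; lra| lra]. }
  assert (HPhi := Phi_bound k m D c ltac:(lra)).
  rewrite Hzz, Hm1 in HPhi.
  assert (HPhi' : E k m (fun t => (S_of t / D - c)^2) <= (2 * (INR m / D) + (INR m * INR k / D - c * (1 - / D))^2) / (1 - /D)^2).
  { eapply Rle_trans. apply HPhi; auto. split; lra.
    apply Rmult_le_compat_r. apply Rlt_le, Rinv_0_lt_compat, pow_lt; lra.
    apply Rplus_le_compat_r. unfold Rdiv. rewrite Rinv_pow by lra.
    assert (0 <= INR m) by apply pos_INR.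
    assert (INR m * mu2 k * (/D)^2 <= 2 * (INR m * /D)); [|lra].
    replace (2 * (INR m * /D)) with (INR m * (2 * D) * (/D)^2) by (field; lra).
    apply Rmult_le_compat_r. apply pow2_ge_0. apply Rmult_le_compat_l; auto. }
  assert (HE0 : 0 <= E k m (fun t => (S_of t / D - c)^2)) by (apply E_nonneg; intros; apply pow2_ge_0).
  assert (Hb0 : 0 <= mass (S m) k Bad).
  { rewrite mass_E. apply E_nonneg; intros. destruct (_ && _)%bool; lra. }
  unfold cond_prob. fold Bad. split.
  - apply Rmult_le_pos; auto. apply Rlt_le, Rinv_0_lt_compat; auto.
  - rewrite HDk, HG in Hb2.
    set (Q := (2 * (INR m / D) + (INR m * INR k / D - c * (1 - / D))^2)) in *.
    set (Ephi := E k m (fun t => (S_of t / D - c)^2)) in *.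
    set (Mt := mass (S m) k (fun _ => true)) in *.
    set (Mb := mass (S m) k Bad) in *.
    set (w := (1 - 2/D)^m) in *.
    assert (Hz2 : 0 < (1 - /D)^2) by (apply pow_lt; lra).
    assert (HT : 0 < INR (S m) * /D * w) by (apply Rmult_lt_0_compat; auto; apply Rmult_lt_0_compat; auto).
    assert (HiE : 0 < / eps^2) by (apply Rinv_0_lt_compat, pow_lt; lra).
    apply Rle_trans with (Mb * / (INR (S m) * / D * w)).
    + apply Rmult_le_compat_l; auto. apply Rinv_le_contravar; auto.
    + apply Rle_trans with ((INR (S m) * /D * (/ eps^2 * Ephi)) * / (INR (S m) * / D * w)).
      * apply Rmult_le_compat_r. apply Rlt_le, Rinv_0_lt_compat; auto. lra.
      * replace ((INR (S m) * /D * (/ eps^2 * Ephi)) * / (INR (S m) * / D * w)) with (Ephi / (eps^2 * w))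
          by (field; repeat split; lra).
        replace (Q / ((1 - / D) ^ 2 * eps ^ 2 * w)) with ((Q / (1 - /D)^2) / (eps^2 * w)) by (field; repeat split; lra).
        unfold Rdiv at 1 3. apply Rmult_le_compat_r; auto.
        apply Rlt_le, Rinv_0_lt_compat. apply Rmult_lt_0_compat; auto. apply pow_lt; lra.
Qed.

Lemma ln_le_mono x y : 0 < x -> x <= y -> ln x <= ln y.
Proof. intros Hx [H|H]; [left; apply ln_increasing; auto| subst; lra]. Qed.

Lemma ln_le_sub1 s : 0 < s -> ln s <= s - 1.
Proof. intros Hs. rewrite <- (ln_exp (s - 1)). apply ln_le_mono; auto.
  pose proof (exp_ineq1_le (s - 1)). lra. Qed.

Lemma ln_le_sqrt t : 1 <= t -> ln t <= 2 * sqrt t.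
Proof. intros Ht. assert (Hs : 0 < sqrt t) by (apply sqrt_lt_R0; lra).
  replace t with (sqrt t * sqrt t) at 1 by (apply sqrt_sqrt; lra).
  rewrite ln_mult by auto. pose proof (ln_le_sub1 _ Hs). lra. Qed.

Lemma bernoulli a m : 0 <= a <= 1 -> 1 - INR m * a <= (1 - a)^m.
Proof. intros Ha. induction m; [simpl; lra|]. rewrite S_INR; simpl pow.
  assert (0 <= INR m) by apply pos_INR. nra. Qed.

Lemma asym (n l D c P s d : R) : 1 <= n -> 0 < l -> 0 < D -> 0 < P -> 0 < c <= 2*P -> c * D = n * l ->
  Rabs s <= d -> / l <= d -> / n <= d -> 0 < d <= 1 ->
  (n-1)/D <= 2*P*d /\ Rabs ((n-1) * (l*(1+s))/D - c*(1 - /D)) <= (6*P + 4*P^2)*d.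
Proof. intros Hn Hl HD HP Hc HcD Hs Hil Hin Hd.
  assert (HDe : D = n * l / c) by (rewrite <- HcD; field; lra).
  assert (Hin0 : 0 < /n) by (apply Rinv_0_lt_compat; lra).
  assert (Hil0 : 0 < /l) by (apply Rinv_0_lt_compat; lra).
  split.
  - rewrite HDe. replace ((n-1)/(n*l/c)) with (c * /l * ((n-1)/n)) by (field; lra).
    assert ((n-1)/n <= 1). { unfold Rdiv. rewrite Rmult_minus_distr_r, Rinv_r by lra. lra. }
    assert (0 <= (n-1)/n). { unfold Rdiv. apply Rmult_le_pos; lra. }
    assert (c * /l <= 2*P*d) by (apply Rmult_le_compat; lra).
    assert (0 <= c * /l) by (apply Rmult_le_pos; lra).
    apply Rle_trans with (c * /l * 1); [apply Rmult_le_compat_l; lra| lra].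
  - replace ((n-1) * (l*(1+s))/D - c*(1 - /D)) with (c * s - (1+s) * c * /n + c^2 * /n * /l)
      by (rewrite HDe; field; lra).
    pose proof (Rabs_triang (c * s - (1+s)*c*/n) (c^2 * /n * /l)).
    pose proof (Rabs_triang (c * s) (- ((1+s)*c*/n))).
    replace (c * s - (1 + s) * c * / n) with (c*s + - ((1+s)*c*/n)) in H by ring.
    rewrite Rabs_Ropp in H0.
    assert (A1 : Rabs (c*s) <= 2*P*d). { rewrite Rabs_mult, (Rabs_right c) by lra. nra. }
    assert (A2 : Rabs ((1+s)*c*/n) <= 4*P*d).
    { rewrite !Rabs_mult, (Rabs_right c), (Rabs_right (/n)) by lra.
      pose proof (Rabs_triang 1 s). rewrite Rabs_R1 in H1.
      assert (0 <= Rabs (1+s) <= 2) by (split; [apply Rabs_pos| lra]).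
      apply Rle_trans with (2 * (2*P) * d); [|lra].
      apply Rmult_le_compat; try lra. apply Rmult_le_pos; lra. apply Rmult_le_compat; lra. }
    assert (A3 : Rabs (c^2 * /n * /l) <= 4*P^2*d).
    { rewrite Rabs_right. 2: { apply Rle_ge. apply Rmult_le_pos; [apply Rmult_le_pos|]; nra. }
      assert (c^2 <= 4*P^2) by nra. assert (/n <= 1) by lra. 
      assert (c^2 * /n <= 4*P^2 * 1) by (apply Rmult_le_compat; nra).
      apply Rmult_le_compat; nra. }
    unfold Rminus in *. lra.
Qed.

Lemma final_est x d D w eps e eta : 0 < eps -> 0 < e -> 0 <= x <= eta -> Rabs d <= eta -> eta <= 1/4 ->
  eta <= e * eps^2 / 10 -> 4 <= D -> 1 - 2*x <= w ->
  (2*x + d^2) / ((1 - /D)^2 * eps^2 * w) < e.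
Proof. intros. assert (0 < /D <= 1/4).
  { split. apply Rinv_0_lt_compat; lra. replace (1/4) with (/4) by lra.
    apply Rinv_le_contravar; lra. }
  assert (Hden : eps^2 / 4 <= (1 - /D)^2 * eps^2 * w).
  { assert (9/16 <= (1 - /D)^2) by (simpl; nra). assert (0 < eps^2) by nra. assert (1/2 <= w) by lra.
    assert (9/16 * eps^2 <= (1 - /D)^2 * eps^2) by (apply Rmult_le_compat_r; lra).
    assert (0 <= (1 - /D)^2 * eps^2) by nra. nra. }
  assert (d^2 <= eta^2). { rewrite <- (pow2_abs d). pose proof (Rabs_pos d). nra. }
  assert (0 < eps^2) by nra.
  apply Rle_lt_trans with ((2*x + d^2) / (eps^2/4)).
  - unfold Rdiv. apply Rmult_le_compat_l. nra. apply Rinv_le_contravar; lra.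
  - apply Rmult_lt_reg_r with (eps^2/4). lra. unfold Rdiv at 1. rewrite Rmult_assoc, Rinv_l by lra. nra.
Qed.

Lemma Rpower_log2 y : 0 < y -> Rpower 2 (log2 y) = y.
Proof. intros Hy. unfold Rpower, log2. assert (ln 2 <> 0) by (pose proof ln_lt_2; lra).
  replace (ln y / ln 2 * ln 2) with (ln y) by (field; auto). apply exp_ln; auto. Qed.

Theorem mainTheorem7 (j : Z) :
  forall eps : R, 0 < eps ->
  Un_cv
    (fun n : nat =>
       cond_prob n (Z.to_nat (k_seq j n))
         (fun e =>
            if Rlt_dec eps
                 (Rabs (S_of e / 2 ^ Z.to_nat (k_seq j n)
                        - powerRZ 2 (- j)
                          * Rpower 2 (frac_part (log2 (INR n) + log2 (log2 (INR n))))
                        - 1))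
            then true else false))
    0.
Proof.
  intros eps Heps e He.
  set (P := powerRZ 2 (-j)).
  assert (HP : 0 < P) by (apply powerRZ_lt; lra).
  set (eta := Rmin (1/4) (e * eps^2 / 10)).
  assert (Heps2 : 0 < eps^2) by (apply pow_lt; lra).
  assert (He10 : 0 < e * eps^2 / 10) by (unfold Rdiv; apply Rmult_lt_0_compat; [apply Rmult_lt_0_compat; lra| lra]).
  assert (Heta : 0 < eta) by (apply Rmin_glb_lt; lra).
  assert (Heta1 : eta <= 1/4) by apply Rmin_l.
  assert (Heta2 : eta <= e * eps^2/10) by apply Rmin_r.
  set (C := 6*P + 4*P^2 + 2*P + 1).
  assert (HC : 0 < C) by (unfold C; nra).
  set (d := Rmin 1 (eta / C)).
  assert (Hd0 : 0 < d) by (apply Rmin_glb_lt; [lra| apply Rmult_lt_0_compat; [lra| apply Rinv_0_lt_compat; lra]]).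
  assert (Hd1 : d <= 1) by apply Rmin_l.
  assert (HdC : d * C <= eta).
  { assert (d <= eta / C) by apply Rmin_r. apply Rmult_le_compat_r with (r := C) in H; [|lra].
    unfold Rdiv in H. rewrite Rmult_assoc, Rinv_l in H by lra. lra. }
  set (J := Rabs (IZR j)).
  assert (HJ : 0 <= J) by apply Rabs_pos.
  set (T := Rmax (Rmax ((8/d)^2) (2*(1+J)/d)) (Rmax (1/d) (J + 3))).
  assert (HT1 : (8/d)^2 <= T) by (unfold T; eapply Rle_trans; [apply Rmax_l| apply Rmax_l]).
  assert (HT2 : 2*(1+J)/d <= T) by (unfold T; eapply Rle_trans; [apply Rmax_r| apply Rmax_l]).
  assert (HT3 : 1/d <= T) by (unfold T; eapply Rle_trans; [apply Rmax_l| apply Rmax_r]).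
  assert (HT4 : J + 3 <= T) by (unfold T; eapply Rle_trans; [apply Rmax_r| apply Rmax_r]).
  set (X := Rpower 2 T + 1/d + 2).
  assert (HRT : 0 < Rpower 2 T) by (unfold Rpower; apply exp_pos).
  assert (Hid : 0 < 1/d) by (unfold Rdiv; rewrite Rmult_1_l; apply Rinv_0_lt_compat; lra).
  assert (HXdef : X = Rpower 2 T + 1/d + 2) by reflexivity.
  destruct (archimed X) as [HX _].
  exists (Z.to_nat (up X)).
  intros n Hn.
  assert (HnX : X <= INR n).
  { apply Rle_trans with (INR (Z.to_nat (up X))); [|apply le_INR; lia].
    rewrite INR_IZR_INZ, Z2Nat.id; [lra|]. apply le_IZR. lra. }
  destruct n as [|m]; [simpl in HnX; lra|].
  set (n := S m) in *.
  set (nr := INR n) in *.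
  assert (Hn2 : 2 <= nr) by lra.
  set (l := log2 nr).
  assert (Hln2 := ln_lt_2).
  assert (HlT : T <= l).
  { unfold l, log2. apply Rmult_le_reg_r with (ln 2); [lra|]. unfold Rdiv. rewrite Rmult_assoc, Rinv_l, Rmult_1_r by lra.
    rewrite <- (ln_exp (T * ln 2)). apply ln_le_mono. apply exp_pos. fold (Rpower 2 T). lra. }
  assert (Hl3 : J + 3 <= l) by lra.
  assert (Hl0 : 0 < l) by lra.
  assert (Hil : / l <= d).
  { replace d with (/ (1/d)) by (field; lra). apply Rinv_le_contravar; lra. }
  assert (Hin : / nr <= d).
  { replace d with (/ (1/d)) by (field; lra). apply Rinv_le_contravar; lra. }
  assert (Hlog0 : 0 <= log2 l).
  { unfold log2. apply Rmult_le_pos. rewrite <- ln_1. apply ln_le_mono; lra.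
    apply Rlt_le, Rinv_0_lt_compat; lra. }
  set (q := sqrt l).
  assert (Hq2 : q * q = l) by (apply sqrt_sqrt; lra).
  assert (Hq0 : 0 < q) by (apply sqrt_lt_R0; lra).
  assert (Hlog1 : log2 l <= 4 * q).
  { pose proof (ln_le_sqrt l ltac:(lra)). unfold log2. apply Rmult_le_reg_r with (ln 2); [lra|].
    unfold Rdiv. rewrite Rmult_assoc, Rinv_l, Rmult_1_r by lra. fold q in H. nra. }
  assert (Hq8 : 8/d <= q).
  { unfold q. rewrite <- (sqrt_pow2 (8/d)). apply sqrt_le_1_alt; lra.
    unfold Rdiv; apply Rmult_le_pos; [lra| apply Rlt_le, Rinv_0_lt_compat; lra]. }
  assert (Hdq : 8 <= d * q).
  { apply Rmult_le_compat_l with (r := d) in Hq8; [|lra]. unfold Rdiv in Hq8.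
    rewrite Rmult_comm, Rmult_assoc, Rinv_l, Rmult_1_r in Hq8 by lra. lra. }
  assert (HJl : 2 * (1 + J) <= l * d).
  { apply Rmult_le_compat_r with (r := d) in HT2; [|lra]. unfold Rdiv in HT2.
    rewrite Rmult_assoc, Rinv_l, Rmult_1_r in HT2 by lra. assert (T * d <= l * d) by (apply Rmult_le_compat_r; lra). lra. }
  assert (Hr : log2 l + 1 + J <= d * l).
  { assert (log2 l <= d / 2 * l).
    { apply Rle_trans with (4 * q); auto. rewrite <- Hq2. unfold Rdiv. nra. }
    lra. }
  set (fr := frac_part (l + log2 l)).
  assert (Hfr : 0 <= fr < 1) by (destruct (base_fp (l + log2 l)); unfold fr; lra).
  set (K := k_seq j n).
  assert (HK : IZR K = l + log2 l - fr + IZR j).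
  { unfold K, k_seq, fr, frac_part. rewrite plus_IZR. fold nr. fold l. ring. }
  assert (HjJ : - J <= IZR j).
  { pose proof (Rle_abs (- IZR j)). rewrite Rabs_Ropp in H. fold J in H. lra. }
  assert (HK2 : (2 <= K)%Z) by (apply le_IZR; lra).
  set (k' := (Z.to_nat K - 1)%nat).
  assert (Hk : Z.to_nat K = S k') by (unfold k'; lia).
  assert (Hk1 : (1 <= k')%nat) by (unfold k'; lia).
  assert (HkR : INR (S k') = IZR K) by (rewrite <- Hk, INR_IZR_INZ, Z2Nat.id by lia; reflexivity).
  set (c := P * Rpower 2 fr).
  pose proof (key m k' c eps Hk1 Heps) as HKey. cbv zeta in HKey.
  set (D := 2 ^ S k') in *.
  assert (HDR : D = Rpower 2 (IZR K)) by (rewrite <- HkR, Rpower_pow by lra; reflexivity).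
  assert (HD4 : 4 <= D).
  { unfold D. replace 4 with (2^2) by (simpl; ring). apply Rle_pow; [lra| lia]. }
  assert (HcD : c * D = nr * l).
  { unfold c, P. rewrite powerRZ_Rpower, HDR by lra. rewrite <- !Rpower_plus.
    rewrite opp_IZR, HK. replace (- IZR j + fr + (l + log2 l - fr + IZR j)) with (l + log2 l) by ring.
    rewrite Rpower_plus, Rpower_log2 by lra. unfold l. rewrite Rpower_log2 by lra. reflexivity. }
  assert (Hc : 0 < c <= 2 * P).
  { unfold c. split. apply Rmult_lt_0_compat; auto. unfold Rpower; apply exp_pos.
    assert (Rpower 2 fr <= 2). { rewrite <- (Rpower_1 2) at 2 by lra. apply Rle_Rpower; lra. }
    nra. }
  set (s := INR (S k') / l - 1).
  assert (Hs : Rabs s <= d).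
  { assert (s = (log2 l - fr + IZR j) / l) by (unfold s; rewrite HkR, HK; field; lra).
    rewrite H. unfold Rdiv. rewrite Rabs_mult, (Rabs_right (/l)) by (apply Rle_ge, Rlt_le, Rinv_0_lt_compat; lra).
    apply Rmult_le_reg_r with l; [lra|]. rewrite Rmult_assoc, Rinv_l, Rmult_1_r by lra.
    apply Rle_trans with (log2 l + 1 + J); [|lra].
    eapply Rle_trans; [apply Rabs_triang|]. pose proof (Rabs_triang (log2 l) (- fr)).
    rewrite Rabs_Ropp, (Rabs_right fr), (Rabs_right (log2 l)) in H0 by lra.
    fold J. unfold Rminus in *. lra. }
  assert (HnR : INR m = nr - 1) by (unfold nr, n; rewrite S_INR; ring).
  destruct (asym nr l D c P s d ltac:(lra) Hl0 ltac:(lra) HP Hc HcD Hs Hil Hin ltac:(lra)) as [A1 A2].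
  assert (HkS : INR (S k') = l * (1 + s)) by (unfold s; field; lra).
  unfold R_dist. rewrite Rminus_0_r. destruct HKey as [Hlo Hhi]. fold K. rewrite Hk. fold c.
  rewrite Rabs_right by (apply Rle_ge; exact Hlo).
  eapply Rle_lt_trans; [exact Hhi|].
  apply final_est with eta; auto.
  - split. unfold Rdiv. apply Rmult_le_pos; [apply pos_INR| apply Rlt_le, Rinv_0_lt_compat; lra].
    rewrite HnR. assert (2*P*d <= eta) by (unfold C in HdC; nra). lra.
  - rewrite HnR, HkS. assert ((6*P + 4*P^2)*d <= eta) by (unfold C in HdC; nra). lra.
  - pose proof (bernoulli (2/D) m). replace (1 - 2 * (INR m / D)) with (1 - INR m * (2/D)) by (field; lra).
    apply H. split. unfold Rdiv; apply Rmult_le_pos; [lra| apply Rlt_le, Rinv_0_lt_compat; lra].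
    apply Rmult_le_reg_r with D; [lra|]. unfold Rdiv. rewrite Rmult_assoc, Rinv_l by lra. lra.
Qed.
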